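(* Let $d,n,m\geq1$ be integers, and let $\mathsf{M}_1$ be an $n$-outcome POVM and $\mathsf{M}_2$ an $m$-outcome POVM on $\mathbb{C}^d$, and set $$\bar P(\mathsf{M}_1,\mathsf{M}_2)=\frac{1}{2nm}\sum_{x=1}^n\sum_{y=1}^m\big\|\mathsf{M}_1(x)+\mathsf{M}_2(y)\big\|.$$ Then the incompatibility robustness satisfies $$\mathcal{R}(\mathsf{M}_1,\mathsf{M}_2)\geq\frac{2nm\,\bar P(\mathsf{M}_1,\mathsf{M}_2)}{d+nm}-1.$$
   Context: $\|\cdot\|$ is the operator norm. Two POVMs are compatible if there exists a POVM $\mathsf{G}(x,y)$ with marginals $\sum_y\mathsf{G}(x,y)=$ first POVM and $\sum_x\mathsf{G}(x,y)=$ second POVM. The incompatibility robustness is $\mathcal{R}(\mathsf{M}_1,\mathsf{M}_2)=\min\{t\geq0 : \{(\mathsf{M}_i+t\mathsf{N}_i)/(1+t)\}_{i=1,2}$ are compatible for some POVMs $\mathsf{N}_1$ ($n$ outcomes) and $\mathsf{N}_2$ ($m$ outcomes) on $\mathbb{C}^d\}$. *)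

(* Defs.v *)
From HB Require Import structures.
From mathcomp Require Import all_boot all_order all_algebra.
From mathcomp Require Import all_classical all_reals.
From mathcomp Require Import complex.
Set Implicit Arguments. Unset Strict Implicit. Unset Printing Implicit Defensive.
Import Order.TTheory GRing.Theory Num.Theory.
Local Open Scope ring_scope.

Section Defs.
Variable R : realType.
Local Notation C := (R[i]).

Definition adjmx (p q : nat) (A : 'M[C]_(p, q)) : 'M[C]_(q, p) := (map_mx Num.conj A)^T.

Definition vnorm (d : nat) (v : 'cV[C]_d) : R :=
  Num.sqrt (\sum_i (complex.Re (v i 0) ^+ 2 + complex.Im (v i 0) ^+ 2)).

Definition opnorm (d : nat) (A : 'M[C]_d) : R :=
  sup [set r : R | exists v : 'cV[C]_d, vnorm v = 1 /\ r = vnorm (A *m v)].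

(* positive semidefinite: <v, A v> >= 0 for all v (order of the numeric field C) *)
Definition psd (d : nat) (A : 'M[C]_d) : Prop :=
  forall v : 'cV[C]_d, 0 <= (adjmx v *m A *m v) 0 0.

Definition POVM (d n : nat) (M : 'I_n -> 'M[C]_d) : Prop :=
  (forall x, psd (M x)) /\ \sum_(x < n) M x = 1%:M.

Definition compatible (d n m : nat) (A : 'I_n -> 'M[C]_d) (B : 'I_m -> 'M[C]_d) : Prop :=
  exists G : 'I_n -> 'I_m -> 'M[C]_d,
    (forall x y, psd (G x y)) /\
    (forall x, \sum_(y < m) G x y = A x) /\
    (forall y, \sum_(x < n) G x y = B y).

Definition mixt (d n : nat) (M N : 'I_n -> 'M[C]_d) (t : R) : 'I_n -> 'M[C]_d :=
  fun x => (real_complex R ((1 + t)^-1)) *: (M x + (real_complex R t) *: N x).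

(* incompatibility robustness (as an infimum; the minimum is attained) *)
Definition robustness (d n m : nat) (M1 : 'I_n -> 'M[C]_d) (M2 : 'I_m -> 'M[C]_d) : R :=
  inf [set t : R | 0 <= t /\
        exists (N1 : 'I_n -> 'M[C]_d) (N2 : 'I_m -> 'M[C]_d),
          POVM N1 /\ POVM N2 /\ compatible (mixt M1 N1 t) (mixt M2 N2 t)].

Definition Pbar (d n m : nat) (M1 : 'I_n -> 'M[C]_d) (M2 : 'I_m -> 'M[C]_d) : R :=
  (2 * n%:R * m%:R)^-1 * \sum_(x < n) \sum_(y < m) opnorm (M1 x + M2 y).

End Defs.

(* Main.v *)
Require Import Defs.
From HB Require Import structures.
From mathcomp Require Import all_boot all_order all_algebra.
From mathcomp Require Import all_classical all_reals.
From mathcomp Require Import complex.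
From mathcomp Require Import ring lra.
Import Order.TTheory GRing.Theory Num.Theory.
Local Open Scope complex_scope.
Local Open Scope ring_scope.

Section Aux.
Variable R : realType.
Local Notation C := (R[i]).
Variable d : nat.
Implicit Types (A B : 'M[C]_d) (v w : 'cV[C]_d).

Definition form A w v : C := (adjmx w *m A *m v) 0 0.
Definition nv2 v : R := \sum_i (complex.Re (v i 0) ^+ 2 + complex.Im (v i 0) ^+ 2).

Lemma adjmxD (w1 w2 : 'cV[C]_d) : adjmx (w1 + w2) = adjmx w1 + adjmx w2.
Proof. by apply/matrixP => i j; rewrite !mxE rmorphD. Qed.

Lemma adjmxZ (a : C) (w : 'cV[C]_d) : adjmx (a *: w) = (Num.conj a) *: adjmx w.
Proof. by apply/matrixP => i j; rewrite !mxE rmorphM. Qed.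

Lemma formDl A w1 w2 v : form A (w1 + w2) v = form A w1 v + form A w2 v.
Proof. by rewrite /form adjmxD !mulmxDl mxE. Qed.
Lemma formDr A w v1 v2 : form A w (v1 + v2) = form A w v1 + form A w v2.
Proof. by rewrite /form mulmxDr mxE. Qed.
Lemma formZl A a w v : form A (a *: w) v = Num.conj a * form A w v.
Proof. by rewrite /form adjmxZ -!scalemxAl mxE. Qed.
Lemma formZr A a w v : form A w (a *: v) = a * form A w v.
Proof. by rewrite /form -!scalemxAr mxE. Qed.
Lemma formAD A B w v : form (A + B) w v = form A w v + form B w v.
Proof. by rewrite /form mulmxDr mulmxDl mxE. Qed.
Lemma formAN A w v : form (- A) w v = - form A w v.
Proof. by rewrite /form mulmxN mulNmx mxE. Qed.
Lemma formAZ a A w v : form (a *: A) w v = a * form A w v.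
Proof. by rewrite /form -scalemxAr -scalemxAl mxE. Qed.
Lemma formA0 w v : form 0 w v = 0.
Proof. by rewrite /form mulmx0 mul0mx mxE. Qed.
Lemma formAsum (I : finType) (F : I -> 'M[C]_d) w v :
  form (\sum_i F i) w v = \sum_i form (F i) w v.
Proof.
apply: (big_morph (fun A => form A w v)); first by move=> x y; exact: formAD.
exact: formA0.
Qed.

Lemma form_expand A w v (l : C) :
  form A (w + l *: v) (w + l *: v) =
  form A w w + l * form A w v + Num.conj l * form A v w
  + l * Num.conj l * form A v v.
Proof.
rewrite !formDl !formDr !formZl !formZr.
by rewrite !addrA; ring.
Qed.


Lemma ge0C (z : C) : 0 <= z -> z = (complex.Re z)%:C /\ 0 <= complex.Re z.
Proof. by case: z => a b; rewrite lecE /= => /andP[/eqP -> h]. Qed.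

Lemma conj_ge0' (z : C) : 0 <= z -> Num.conj z = z.
Proof. case: z => a b; rewrite lecE /= => /andP[/eqP -> _]. by rewrite /Num.conj /= oppr0. Qed.

Lemma psd_herm A w v : psd A -> form A v w = Num.conj (form A w v).
Proof.
move=> hA.
set a := form A w w; set b := form A v v; set c := form A w v; set c' := form A v w.
have ha : Num.conj a = a by apply: conj_ge0'; apply: hA.
have hb : Num.conj b = b by apply: conj_ge0'; apply: hA.
have E1 := conj_ge0' _ (hA (w + 1 *: v)).
rewrite /psd in hA.
rewrite -/(form A _ _) form_expand -/a -/b -/c -/c' in E1.
have E2 := conj_ge0' _ (hA (w + 'i%C *: v)).
rewrite -/(form A _ _) form_expand -/a -/b -/c -/c' in E2.
have ci : Num.conj ('i%C : C) = - 'i%C by apply/eqP; rewrite eq_complex /= oppr0 !eqxx.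
rewrite !rmorphD !rmorphM /= in E1 E2.
rewrite !conjCK ha hb ci !rmorph1 in E1 E2.
have X : 2 * 'i%C * (Num.conj c - c') = 0.
  have -> : 2 * 'i%C * (Num.conj c - c') = 
     'i%C * ((Num.conj c + Num.conj c') - (c + c')) - 
     (('i%C * Num.conj c' - 'i%C * Num.conj c) - ('i%C * c - 'i%C * c')) by ring.
  have e1 : Num.conj c + Num.conj c' - (c + c') = 0.
    move/eqP: E1; rewrite -subr_eq0 => /eqP E1.
    by apply: etrans E1; ring.
  have e2 : 'i%C * Num.conj c' - 'i%C * Num.conj c - ('i%C * c - 'i%C * c') = 0.
    move/eqP: E2; rewrite -subr_eq0 => /eqP E2.
    by apply: etrans E2; ring.
  by rewrite e1 e2 mulr0 subrr.
move/eqP: X; rewrite mulf_eq0 subr_eq0 => /orP[|/eqP <-]; last by [].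
by rewrite mulf_eq0 pnatr_eq0 orFb (negbTE (neq0Ci _)).
Qed.


Lemma quad_aux (a b K : R) : 0 <= a -> 0 <= b -> 0 <= K ->
  (forall r, 0 <= a - 2 * r * K + r ^+ 2 * K * b) -> K <= a * b.
Proof.
move=> ha hb hK H.
have [K0|Kpos] := eqVneq K 0; first by rewrite K0 mulr_ge0.
have [b0|bpos] := eqVneq b 0.
  have := H ((a + 1) / (2 * K)).
  have e : (a + 1) / (2 * K) * K = (a + 1) / 2 by field.
  rewrite b0 mulr0 addr0 -mulrA e.
  have -> : 2 * ((a + 1) / 2) = a + 1 by field.
  lra.
have := H (b^-1).
have -> : b^-1 ^+ 2 * K * b = b^-1 * K by field.
have -> : 2 * b^-1 * K = 2 * (b^-1 * K) by ring.
move=> h.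
have h2 : b^-1 * K <= a by lra.
have hbp : 0 < b by rewrite lt_def bpos hb.
have : b * (b^-1 * K) <= b * a by rewrite ler_pM2l.
by rewrite mulrA mulfV // mul1r mulrC.
Qed.

Lemma psd_CS A w v : psd A ->
  complex.Re (form A w v) ^+ 2 + complex.Im (form A w v) ^+ 2
  <= complex.Re (form A w w) * complex.Re (form A v v).
Proof.
move=> hA.
have [ea ha] := ge0C _ (hA w); have [eb hb] := ge0C _ (hA v).
rewrite -/(form A w w) in ea ha; rewrite -/(form A v v) in eb hb.
apply: quad_aux => //; first by rewrite addr_ge0 ?sqr_ge0.
move=> r.
have := hA (w + (- (r%:C) * Num.conj (form A w v)) *: v).
rewrite -/(form A _ _) form_expand (psd_herm A w v hA) ea eb.
case: (form A w v) => x y.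
rewrite lecE => /andP[_].
simpc; rewrite /= => h; apply: (le_trans h).
by rewrite le_eqVlt; apply/orP; left; apply/eqP; ring.
Qed.


Lemma nv2_ge0 v : 0 <= nv2 v.
Proof. by apply: sumr_ge0 => i _; rewrite addr_ge0 ?sqr_ge0. Qed.

Lemma form1 v : form 1%:M v v = (nv2 v)%:C.
Proof.
rewrite /form mulmx1 mxE /nv2 rmorph_sum; apply: eq_bigr => i _.
rewrite !mxE; case: (v i 0) => x y; simpc.
apply/eqP; rewrite eq_complex /= !expr2 eqxx /=; apply/eqP; ring.
Qed.

Lemma formM1 A v : form A (A *m v) v = form 1%:M (A *m v) (A *m v).
Proof. by rewrite /form -mulmxA mulmx1. Qed.


Lemma nv2_delta (i0 : 'I_d) : nv2 (delta_mx i0 0) = 1.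
Proof.
rewrite /nv2 (bigD1 i0) //= big1 ?addr0.
  by rewrite !mxE !eqxx /= expr1n expr0n addr0.
by move=> i /negbTE hi; rewrite !mxE hi /= expr0n addr0.
Qed.

Lemma vnorm_nv2 v : vnorm v = Num.sqrt (nv2 v).
Proof. by []. Qed.

Lemma opnorm_le A K : (0 < d)%N -> psd A -> 0 <= K ->
  (forall u, complex.Re (form A u u) <= K * nv2 u) -> opnorm A <= K.
Proof.
move=> hd hA hK H.
apply: ge_sup.
  exists (vnorm (A *m delta_mx (Ordinal hd) 0)).
  exists (delta_mx (Ordinal hd) 0); split => //.
  by rewrite vnorm_nv2 nv2_delta sqrtr1.
move=> r [v [hv ->]].
have hv1 : nv2 v = 1.
  by move: hv; rewrite vnorm_nv2 => /(congr1 (fun z => z ^+ 2)); rewrite sqr_sqrtr ?nv2_ge0 // expr1n.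
set w := A *m v.
have hN := nv2_ge0 w.
have CS := psd_CS A w v hA.
rewrite /w formM1 -/w form1 /= expr0n addr0 in CS.
have [_ hqw] := ge0C _ (hA w); have [_ hqv] := ge0C _ (hA v).
rewrite -/(form A _ _) in hqw hqv.
have Hw := H w; have Hv := H v; rewrite hv1 mulr1 in Hv.
have hNK : nv2 w <= K ^+ 2.
  have [N0|Npos] := eqVneq (nv2 w) 0; first by rewrite N0 sqr_ge0.
  have hNp : 0 < nv2 w by rewrite lt_def Npos hN.
  have : nv2 w ^+ 2 <= K ^+ 2 * nv2 w by nra.
  by rewrite expr2 ler_pM2r // => ->.
rewrite vnorm_nv2 -(ger0_norm hK) -sqrtr_sqr.
exact: ler_wsqrtr.
Qed.


Lemma ReD (x y : C) : complex.Re (x + y) = complex.Re x + complex.Re y.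
Proof. by case: x; case: y. Qed.

Lemma Re_sum (I : finType) (F : I -> C) :
  complex.Re (\sum_i F i) = \sum_i complex.Re (F i).
Proof. by apply: (big_morph (@complex.Re R)) => //; exact: ReD. Qed.

Lemma form_delta_l A (i : 'I_d) v : form A (delta_mx i 0) v = (A *m v) i 0.
Proof.
rewrite /form.
have -> : adjmx (delta_mx i 0 : 'cV[C]_d) = delta_mx 0 i.
  apply/matrixP => k l; rewrite !mxE.
  by case: (_ == _); case: (_ == _) => /=; rewrite ?rmorph1 ?rmorph0.
by rewrite -mulmxA -rowE mxE.
Qed.

Lemma form_delta A (i : 'I_d) : form A (delta_mx i 0) (delta_mx i 0) = A i i.
Proof. by rewrite form_delta_l -colE mxE. Qed.

Lemma sum_aux (q N T : R) : 0 <= q -> 0 <= N -> 0 <= T ->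
  (forall l, 2 * l * q <= l ^+ 2 * N + T * q) -> q <= T * N.
Proof.
move=> hq hN hT H.
have [q0|qpos] := eqVneq q 0; first by rewrite q0 mulr_ge0.
have hqp : 0 < q by rewrite lt_def qpos hq.
have [N0|Npos] := eqVneq N 0.
  have := H (T + 1); rewrite N0 mulr0 add0r => h.
  exfalso; nra.
have hNp : 0 < N by rewrite lt_def Npos hN.
have := H (q / N).
have -> : (q / N) ^+ 2 * N = q * (q / N) by field.
move=> h.
have h1 : q * (q / N) <= T * q by nra.
have h2 : q / N <= T by rewrite mulrC ler_pM2r // in h1.
by rewrite -ler_pdivrMr.
Qed.

Lemma trace_bound A u : psd A ->
  complex.Re (form A u u) <= complex.Re (\tr A) * nv2 u.
Proof.
move=> hA.
set g := fun i => (A *m u) i 0.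
have eq1 : complex.Re (form A u u) =
   \sum_i (complex.Re (u i 0) * complex.Re (g i) + complex.Im (u i 0) * complex.Im (g i)).
  rewrite /form -mulmxA mxE Re_sum; apply: eq_bigr => i _.
  rewrite /g; set z := (A *m u) i 0; rewrite !mxE; case: (u i 0) => x y; case: z => a b; simpc.
  by rewrite /=; ring.
have hT : complex.Re (\tr A) = \sum_i complex.Re (A i i) by rewrite /mxtrace Re_sum.
have hAi : forall i, 0 <= complex.Re (A i i).
  by move=> i; have [_ h] := ge0C _ (hA (delta_mx i 0)); rewrite -/(form A _ _) form_delta in h.
have hCS : forall i, complex.Re (g i) ^+ 2 + complex.Im (g i) ^+ 2 <=
    complex.Re (A i i) * complex.Re (form A u u).
  move=> i; have := psd_CS A (delta_mx i 0) u hA.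
  by rewrite form_delta_l form_delta.
have [_ hq] := ge0C _ (hA u); rewrite -/(form A _ _) in hq.
apply: sum_aux => //; first exact: nv2_ge0.
  by rewrite hT; apply: sumr_ge0 => i _.
move=> l.
rewrite {1}eq1 hT /nv2 mulr_sumr mulr_sumr mulr_suml -big_split /=.
apply: ler_sum => i _.
have := hCS i.
set q := complex.Re (form A u u).
set t := complex.Re (A i i).
set x := complex.Re (u i 0); set y := complex.Im (u i 0).
set a := complex.Re (g i); set b := complex.Im (g i).
have := sqr_ge0 (l * x - a); have := sqr_ge0 (l * y - b).
clearbody x y a b q t. move=> h1 h2 h3.
nra.
Qed.


Lemma ReCM (r : R) (z : C) : complex.Re (r%:C * z) = r * complex.Re z.
Proof. by case: z => a b; simpc. Qed.

Lemma Re_real (r : R) : complex.Re (r%:C) = r.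
Proof. by []. Qed.

Lemma psd_form A v : psd A -> 0 <= complex.Re (form A v v).
Proof. by move=> hA; have [_ h] := ge0C _ (hA v). Qed.

Lemma psdD A B : psd A -> psd B -> psd (A + B).
Proof.
move=> hA hB v; rewrite -/(form _ _ _) formAD.
exact: addr_ge0 (hA v) (hB v).
Qed.

Lemma psd0 : psd (0 : 'M[C]_d).
Proof. by move=> v; rewrite -/(form _ _ _) formA0. Qed.

Lemma psd_sum (I : finType) (P : pred I) (F : I -> 'M[C]_d) :
  (forall i, psd (F i)) -> psd (\sum_(i | P i) F i).
Proof.
move=> hF; elim/big_ind: _ => //; first exact: psd0.
exact: psdD.
Qed.

Lemma psdZ (r : R) A : 0 <= r -> psd A -> psd (r%:C *: A).
Proof.
move=> hr hA v; rewrite -/(form _ _ _) formAZ.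
by apply: mulr_ge0 => //; [rewrite ler0c | exact: hA].
Qed.

Lemma psd1 : psd (1%:M : 'M[C]_d).
Proof. by move=> v; rewrite -/(form _ _ _) form1 ler0c nv2_ge0. Qed.

Lemma trace_ge0 A : psd A -> 0 <= complex.Re (\tr A).
Proof.
move=> hA; rewrite /mxtrace Re_sum; apply: sumr_ge0 => i _.
by have [_ h] := ge0C _ (hA (delta_mx i 0)); rewrite -/(form A _ _) form_delta in h.
Qed.

Lemma Re_formAsum (I : finType) (F : I -> 'M[C]_d) u :
  complex.Re (form (\sum_i F i) u u) = \sum_i complex.Re (form (F i) u u).
Proof. by rewrite formAsum Re_sum. Qed.

Lemma Re_form_mixt (n : nat) (M N : 'I_n -> 'M[C]_d) (t : R) x u :
  complex.Re (form (mixt M N t x) u u) =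
  (1 + t)^-1 * (complex.Re (form (M x) u u) + t * complex.Re (form (N x) u u)).
Proof. by rewrite /mixt formAZ ReCM formAD formAZ ReD ReCM. Qed.

Lemma tr_sum (I : finType) (F : I -> 'M[C]_d) : \tr (\sum_i F i) = \sum_i \tr (F i).
Proof. by apply: (big_morph _ (@mxtraceD _ _)); rewrite /mxtrace big1 // => i _; rewrite mxE. Qed.

End Aux.
Arguments form {R d}. Arguments nv2 {R d}. Arguments nv2_ge0 {R d}.
Arguments ReD {R}. Arguments formAD {R d}. Arguments form1 {R d}.

Lemma comb (R : realType) (I J : finType) (g : I -> J -> R) x y :
  (forall i j, 0 <= g i j) ->
  \sum_j g x j + \sum_i g i y <= g x y + \sum_i \sum_j g i j.
Proof.
move=> hg.
rewrite [\sum_i g i y](bigD1 x) //= [\sum_i \sum_j g i j](bigD1 x) //=.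
have : \sum_(i | i != x) g i y <= \sum_(i | i != x) \sum_j g i j.
  apply: ler_sum => i _; rewrite (bigD1 y) //= lerDl.
  by apply: sumr_ge0.
lra.
Qed.


Lemma mixt_sum (R : realType) (d n : nat) (M N : 'I_n -> 'M[R[i]]_d) (t : R) :
  0 <= t -> POVM M -> POVM N -> \sum_x mixt M N t x = 1%:M.
Proof.
move=> ht [_ SM] [_ SN].
rewrite /mixt -scaler_sumr big_split /= -scaler_sumr SM SN.
have e : ((1 + t)^-1)%:C * (1 + t%:C) = 1 :> R[i].
  have -> : (1 + t%:C : R[i]) = (1 + t)%:C by rewrite rmorphD rmorph1.
  by rewrite -rmorphM mulVf ?rmorph1 //; apply: lt0r_neq0; lra.
by rewrite -{1}(scale1r (1%:M : 'M[R[i]]_d)) -scalerDl scalerA e scale1r.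
Qed.

Lemma feasible_bound (R : realType) (d n m : nat)
  (M1 N1 : 'I_n -> 'M[R[i]]_d) (M2 N2 : 'I_m -> 'M[R[i]]_d) (t : R)
  (G : 'I_n -> 'I_m -> 'M[R[i]]_d) :
  (0 < d)%N -> POVM M1 -> POVM M2 -> POVM N1 -> POVM N2 -> 0 <= t ->
  (forall x y, psd (G x y)) ->
  (forall x, \sum_y G x y = mixt M1 N1 t x) ->
  (forall y, \sum_x G x y = mixt M2 N2 t y) ->
  \sum_x \sum_y opnorm (M1 x + M2 y) <= (1 + t) * (d%:R + n%:R * m%:R).
Proof.
move=> hd hM1 hM2 hN1 hN2 ht PG GA GB.
have hs : 0 < 1 + t by lra.
set T := fun x y => complex.Re (\tr (G x y)).
have hT0 : forall x y, 0 <= T x y by move=> x y; apply: trace_ge0.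
have hsum : \sum_x \sum_y T x y = d%:R.
  rewrite /T.
  under eq_bigr do rewrite -Re_sum -tr_sum GA.
  rewrite -Re_sum -tr_sum mixt_sum // mxtrace1.
  by rewrite -(rmorph_nat (real_complex R)).
have key : forall x y, opnorm (M1 x + M2 y) <= (1 + t) * (T x y + 1).
  move=> x y; apply: opnorm_le => //.
  - by apply: psdD; [case: hM1 | case: hM2].
  - by apply: mulr_ge0; [lra | rewrite addr_ge0].
  move=> u.
  set g := fun x y => complex.Re (form (G x y) u u).
  have hg0 : forall x y, 0 <= g x y by move=> x' y'; apply: psd_form.
  have tot : \sum_x \sum_y g x y = nv2 u.
    rewrite /g.
    under eq_bigr do rewrite -Re_formAsum GA.
    by rewrite -Re_formAsum mixt_sum // form1.
  have h1 : complex.Re (form (M1 x) u u) <= (1 + t) * \sum_y g x y.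
    have -> : \sum_y g x y = (1 + t)^-1 * (complex.Re (form (M1 x) u u)
        + t * complex.Re (form (N1 x) u u)) by rewrite /g -Re_formAsum GA Re_form_mixt.
    rewrite mulrA mulfV ?mul1r; last by apply: lt0r_neq0.
    have : 0 <= complex.Re (form (N1 x) u u) by apply: psd_form; case: hN1.
    nra.
  have h2 : complex.Re (form (M2 y) u u) <= (1 + t) * \sum_x g x y.
    have -> : \sum_x g x y = (1 + t)^-1 * (complex.Re (form (M2 y) u u)
        + t * complex.Re (form (N2 y) u u)) by rewrite /g -Re_formAsum GB Re_form_mixt.
    rewrite mulrA mulfV ?mul1r; last by apply: lt0r_neq0.
    have : 0 <= complex.Re (form (N2 y) u u) by apply: psd_form; case: hN2.
    nra.
  have hc := @comb _ _ _ g x y hg0; rewrite tot in hc.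
  have htr : g x y <= T x y * nv2 u by apply: trace_bound.
  rewrite formAD ReD.
  have hN := nv2_ge0 u.
  set s := 1 + t in hs h1 h2 *.
  set F1 := \sum_y g x y in h1 hc; set F2 := \sum_x g x y in h2 hc.
  have : s * (F1 + F2) <= s * (T x y * nv2 u + nv2 u).
    by rewrite ler_pM2l //; lra.
  nra.
apply: (@le_trans _ _ (\sum_x \sum_y (1 + t) * (T x y + 1))).
  by apply: ler_sum => x _; apply: ler_sum => y _; apply: key.
rewrite -[in leRHS]hsum mulrDr mulr_sumr.
have -> : (1 + t) * (n%:R * m%:R) = \sum_(x < n) \sum_(y < m) (1 + t).
  by rewrite !sumr_const !card_ord (mulrC n%:R) mulrA !mulr_natr.
rewrite -big_split /=; apply: ler_sum => x _.
rewrite mulr_sumr -big_split /=; apply: ler_sum => y _.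
by rewrite mulrDr mulr1.
Qed.

Section Exist.
Variable R : realType.
Local Notation C := (R[i]).

Lemma scale1C (d : nat) (A : 'M[C]_d) : (1 : R)%:C *: A = A.
Proof. by rewrite rmorph1 scale1r. Qed.

Lemma scaleCC (d : nat) (a b : R) (A : 'M[C]_d) : a%:C *: (b%:C *: A) = (a * b)%:C *: A.
Proof. by rewrite scalerA rmorphM. Qed.

Lemma scaleCD (d : nat) (a b : R) (A : 'M[C]_d) : a%:C *: A + b%:C *: A = (a + b)%:C *: A.
Proof. by rewrite -scalerDl rmorphD. Qed.

Lemma mulrnC (d : nat) (A : 'M[C]_d) k : A *+ k = (k%:R : R)%:C *: A.
Proof. by rewrite rmorph_nat scaler_nat. Qed.

Lemma feasible_exists (d n m : nat) (M1 : 'I_n -> 'M[C]_d) (M2 : 'I_m -> 'M[C]_d) :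
  (1 <= n)%N -> POVM M1 -> POVM M2 ->
  exists (N1 : 'I_n -> 'M[C]_d) (N2 : 'I_m -> 'M[C]_d),
    POVM N1 /\ POVM N2 /\ compatible (mixt M1 N1 n%:R) (mixt M2 N2 n%:R).
Proof.
move=> hn [P1 S1] [P2 S2].
have hnp : (0 : R) < n%:R by rewrite ltr0n.
have hc : (0 : R) <= (n%:R)^-1 by rewrite invr_ge0 ltW.
set c : R := (n%:R)^-1.
have eM : forall x, 1%:M - M1 x = \sum_(x' | x' != x) M1 x'.
  by move=> x; rewrite -S1 (bigD1 x) //= addrC addrK.
exists (fun x => c%:C *: ((1%:M - M1 x) + c%:C *: 1%:M)), M2.
split; [split|split; [split => // |]].
- move=> x; apply: psdZ => //; apply: psdD; last by apply: psdZ => //; apply: psd1.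
  by rewrite eM; apply: psd_sum.
- rewrite -scaler_sumr big_split /= sumrB S1 !sumr_const card_ord.
  rewrite !mulrnC scaleCC.
  have -> : (n%:R : R)%:C *: (1%:M : 'M[C]_d) - 1%:M + (n%:R * c)%:C *: 1%:M
      = (n%:R - 1 + n%:R * c)%:C *: 1%:M.
    by rewrite !rmorphD rmorphN rmorph1 !scalerDl scaleN1r.
  rewrite scaleCC.
  have -> : c * (n%:R - 1 + n%:R * c) = 1 by rewrite /c; field; rewrite pnatr_eq0 -lt0n.
  exact: scale1C.
have hn0 : (n%:R : R) != 0 by rewrite pnatr_eq0 -lt0n.
have hn1 : (1 + n%:R : R) != 0 by apply: lt0r_neq0; lra.
have nc : (n%:R : R) * c = 1 by rewrite /c mulfV.
have m1 : forall x, mixt M1 (fun x : 'I_n => c%:C *: ((1%:M - M1 x) + c%:C *: 1%:M)) n%:R x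
    = c%:C *: 1%:M.
  move=> x; rewrite /mixt scaleCC nc scale1C.
  have -> : M1 x + (1%:M - M1 x + c%:C *: 1%:M) = (1 + c)%:C *: 1%:M.
    by rewrite addrA (addrC (M1 x)) subrK -scaleCD scale1C.
  rewrite scaleCC; congr (_%:C *: _); rewrite /c; field.
  by rewrite hn0 hn1.
have m2 : forall y, mixt M2 M2 n%:R y = M2 y.
  move=> y; rewrite /mixt -{1}(scale1C _ (M2 y)) scaleCD scaleCC mulVf //.
  exact: scale1C.
exists (fun x y => c%:C *: M2 y); split; [|split].
- by move=> x y; apply: psdZ.
- by move=> x; rewrite m1 -scaler_sumr S2.
- by move=> y; rewrite m2 sumr_const card_ord mulrnC scaleCC nc scale1C.
Qed.

End Exist.

Local Close Scope complex_scope.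

Theorem mainTheorem6 (R : realType) (d n m : nat)
  (M1 : 'I_n -> 'M[R[i]]_d) (M2 : 'I_m -> 'M[R[i]]_d) :
  (1 <= d)%N -> (1 <= n)%N -> (1 <= m)%N ->
  POVM M1 -> POVM M2 ->
  robustness M1 M2 >=
    (2 * n%:R * m%:R * Pbar M1 M2) / (d%:R + n%:R * m%:R) - 1.
Proof.
move=> hd hn hm hM1 hM2.
rewrite /robustness; apply: lb_le_inf.
  have [N1 [N2 [h1 [h2 h3]]]] := @feasible_exists R d n m M1 M2 hn hM1 hM2.
  by exists n%:R; split; [rewrite ler0n | exists N1, N2].
move=> t [ht [N1 [N2 [hN1 [hN2 [G [PG [GA GB]]]]]]]].
have B := @feasible_bound R d n m M1 N1 M2 N2 t G hd hM1 hM2 hN1 hN2 ht PG GA GB.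
have hnR : (0 : R) < n%:R by rewrite ltr0n.
have hmR : (0 : R) < m%:R by rewrite ltr0n.
have hdR : (0 : R) < d%:R by rewrite ltr0n.
have hD : (0 : R) < d%:R + n%:R * m%:R by rewrite addr_gt0 // mulr_gt0.
rewrite /Pbar mulrA mulfV ?mul1r; last by rewrite mulf_neq0 ?lt0r_neq0 // mulr_gt0.
rewrite lerBlDr ler_pdivrMr //.
by rewrite addrC.
Qed.
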